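(* Let $\mathcal{M}$ and $\mathcal{N}$ be matroids on the same finite ground set $V$, and let $k\ge1$ be an integer. If $r(\mathcal{M}[X])+r(\mathcal{N}[V\setminus X])\ge k+1$ for all $X\subseteq V$ for which $V\setminus X$ is a flat of $\mathcal{N}$ of rank at most $k-1$, then $\mathbf{RG}(\mathcal{M},\mathcal{N};k)$ is connected.
   Context: $\mathcal{M}[X]=\{A\in\mathcal{M}:A\subseteq X\}$ and $r$ is matroid rank. A flat of $\mathcal{N}$ is $F\subseteq V$ with $r(\mathcal{N}[F\cup\{x\}])>r(\mathcal{N}[F])$ for every $x\in V\setminus F$. $\mathbf{RG}(\mathcal{M},\mathcal{N};k)$ is the graph whose vertices are the common independent sets of $\mathcal{M}$ and $\mathcal{N}$ of cardinality $k$, two such sets $S,T$ being adjacent if $S\cup T$ is an independent set of $\mathcal{M}$ of cardinality $k+1$. *)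

(* Defs.v *)
From mathcomp Require Import all_boot.
Set Implicit Arguments. Unset Strict Implicit. Unset Printing Implicit Defensive.

(* A matroid on the finite ground set V := [set: T], given by its independent sets. *)
Record matroid (T : finType) := Matroid {
  indep : pred {set T};
  indep0 : indep set0;
  indep_sub : forall A B : {set T}, B \subset A -> indep A -> indep B;
  indep_aug : forall A B : {set T}, indep A -> indep B -> #|A| < #|B| ->
     exists2 x, x \in B :\: A & indep (x |: A)
}.

Definition restrict (T : finType) (M : matroid T) (X : {set T}) : pred {set T} :=
  [pred A | indep M A && (A \subset X)].

Definition famrank (T : finType) (F : pred {set T}) : nat :=
  \max_(A : {set T} | F A) #|A|.

Definition flat (T : finType) (N : matroid T) (F : {set T}) : Prop :=
  forall x : T, x \notin F ->
    famrank (restrict N F) < famrank (restrict N (x |: F)).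

Definition rg_vertex (T : finType) (M N : matroid T) (k : nat) (S : {set T}) : bool :=
  [&& indep M S, indep N S & #|S| == k].

Definition rg_adj (T : finType) (M N : matroid T) (k : nat) : rel {set T} :=
  fun S U => [&& rg_vertex M N k S, rg_vertex M N k U,
                 indep M (S :|: U) & #|S :|: U| == k.+1].

Definition rg_connected (T : finType) (M N : matroid T) (k : nat) : Prop :=
  forall S U : {set T}, rg_vertex M N k S -> rg_vertex M N k U ->
    connect (rg_adj M N k) S U.

(* Main.v *)
Require Import Defs.
From mathcomp Require Import all_boot zify.
Set Implicit Arguments. Unset Strict Implicit. Unset Printing Implicit Defensive.

Section Basics.
Variable T : finType.
Implicit Types (Mx : matroid T) (A B W Z P S : {set T}).

Lemma Mlem Mx S x0 x y : x0 \notin S -> indep Mx (x0 |: S) -> ~~ indep Mx (x |: S) ->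
  y \in S -> x \notin S -> indep Mx (x |: (S :\ y)) -> indep Mx (x0 |: (x |: (S :\ y))).
Proof.
move=> x0S i0 nix yS xS iW.
have cW : #|x |: (S :\ y)| = #|S|.
  by rewrite cardsU1 (cardsD1 y S) yS !inE (negbTE xS) andbF.
have lt : #|x |: (S :\ y)| < #|x0 |: S| by rewrite cW cardsU1 x0S.
have [e] := indep_aug iW i0 lt.
rewrite !inE negb_or negb_and negbK => /andP [/andP [nex /orP [eyS| enS]] /orP [/eqP ->|eS]] //; last first.
  by rewrite eS in enS.
  move=> ie; rewrite (eqP eyS) in ie; case/negP: nix; apply: (indep_sub _ ie).
  apply/subsetP=> z; rewrite !inE; case/orP=> [->|zS]; first by rewrite orbT.
  by case: (z =P y) => [->|]; rewrite ?eqxx ?zS ?orbT.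
Qed.

Lemma Nlem Mx S x0 x y1 y' : x0 \notin S -> x \notin S -> x != x0 -> y1 \in S -> y' \in S ->
  y1 != y' -> indep Mx (x0 |: (S :\ y1)) -> indep Mx (x |: (S :\ y')) ->
  ~~ indep Mx (x0 |: (S :\ y')) -> indep Mx (x |: ((x0 |: (S :\ y1)) :\ y')).
Proof.
move=> x0S xS xx0 y1S y'S y1y' i1 i2 ni.
set R := (x0 |: (S :\ y1)) :\ y'.
have iR : indep Mx R by apply: indep_sub i1; apply: subsetDl.
have lt : #|R| < #|x |: (S :\ y')|.
  have h1 := cardsD1 y' (x0 |: (S :\ y1)).
  have h2 := cardsD1 y1 S; have h3 := cardsD1 y' S.
  have h4 := cardsU1 x0 (S :\ y1). have h5 := cardsU1 x (S :\ y').
  rewrite !inE y'S [y' == y1]eq_sym y1y' /= orbT in h1.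
  rewrite !inE (negbTE x0S) andbF /= in h4.
  rewrite !inE (negbTE xS) andbF /= in h5.
  rewrite y1S in h2; rewrite y'S in h3.
  rewrite -/R h5.
  move: h1 h2 h3 h4 h5; rewrite -/R /=. lia.
have [e] := indep_aug iR i2 lt.
rewrite !inE => /andP [neR /orP [/eqP ->|/andP [ey' eS]]] // ie.
case/negP: ni; apply: (indep_sub _ ie).
have ey1 : e == y1.
  move: neR; rewrite ey' eS /= andbT negb_or => /andP [_]; by rewrite negbK.
rewrite (eqP ey1).
apply/subsetP=> z; rewrite !inE; case/orP=> [/eqP ->|/andP [zy' zS]].
  have x0y' : x0 != y' by apply: contraNneq x0S => ->.
  by rewrite x0y' eqxx orbT.
rewrite zy' /=; by case: (z =P y1) => //= _; rewrite zS orbT.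
Qed.
End Basics.
From Stdlib Require Import ClassicalDescription Classical.
Section Basics1.
Variable T : finType.
Implicit Types (Mx : matroid T) (A B W Z P : {set T}).

Lemma ext Mx A B : indep Mx A -> indep Mx B -> #|A| <= #|B| ->
  exists W, [/\ indep Mx W, A \subset W, W \subset A :|: B & #|W| = #|B|].
Proof.
move=> iA iB; move Hn: (#|B| - #|A|) => n; elim: n A iA Hn => [|n IH] A iA Hn le.
  exists A; split=> //; first exact: subsetUl.
  by apply/eqP; rewrite eqn_leq le /= -subn_eq0 Hn.
have lt : #|A| < #|B| by rewrite -subn_gt0 Hn.
have [x /setDP [xB xA] ixA] := indep_aug iA iB lt.
have cx : #|x |: A| = #|A|.+1 by rewrite cardsU1 xA.
have h1 : #|B| - #|x |: A| = n by rewrite cx subnS Hn.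
have h2 : #|x |: A| <= #|B| by rewrite cx.
have [W [iW sAW sWB cW]] := IH (x |: A) ixA h1 h2.
exists W; split=> //.
  by apply: subset_trans sAW; exact: subsetU1.
apply: (subset_trans sWB); apply/subsetP=> z; rewrite !inE.
by case/orP=> [/orP [/eqP -> |->]|->]; rewrite ?xB ?orbT.
Qed.

Lemma missing W P : W \subset P -> #|W| < #|P| -> exists2 a, a \in P & a \notin W.
Proof.
move=> sWP lt; apply/subsetPn; apply: contraTN lt => sPW.
by rewrite -leqNgt; apply: subset_leq_card.
Qed.

Lemma fill Mx W Z : W \subset Z -> #|Z| <= #|W| -> indep Mx W -> indep Mx Z.
Proof.
move=> sWZ le iW; have [_ e] := subset_leqif_card sWZ.
apply: (indep_sub _ iW); rewrite -e eqn_leq le andbT; exact: subset_leq_card.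
Qed.

End Basics1.
Section Block.
Variable T : finType.
Variables (M N : matroid T) (k : nat).
Hypothesis hyp : forall X : {set T},
     flat N (~: X) -> famrank (restrict N (~: X)) <= k - 1 ->
     k.+1 <= famrank (restrict M X) + famrank (restrict N (~: X)).

Lemma blocking (S A : {set T}) : rg_vertex M N k S -> A \subset S -> #|A| < k ->
 (forall x, x \notin A -> indep N (x |: A) -> (x \in S :\: A) || ~~ indep M (x |: (S :\: A))) -> False.
Proof.
case/and3P=> iMS iNS /eqP cS sAS ltA Hp.
set G := [set x | (x \in A) || ~~ indep N (x |: A)].
have iA : indep N A by apply: indep_sub iNS.
have iSA : indep M (S :\: A) by apply: indep_sub iMS; apply: subsetDl.
have rN : famrank (restrict N G) <= #|A|.
  apply/bigmax_leqP => B /andP [iB sBG]; rewrite leqNgt; apply/negP => lt.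
  have [x /setDP [xB xA] ixA] := indep_aug iA iB lt.
  by have := subsetP sBG x xB; rewrite inE (negbTE xA) ixA.
have rM : famrank (restrict M (~: G)) <= #|S :\: A|.
  apply/bigmax_leqP => B /andP [iB sBG]; rewrite leqNgt; apply/negP => lt.
  have [x /setDP [xB xSA] ixSA] := indep_aug iSA iB lt.
  have := subsetP sBG x xB; rewrite !inE negb_or negbK => /andP [xA ixA].
  by have := Hp x xA ixA; rewrite (negbTE xSA) ixSA.
have sAG : A \subset G by apply/subsetP=> z zA; rewrite inE zA.
have fl : flat N G.
  move=> x; rewrite inE negb_or negbK => /andP [xA ixA].
  apply: (leq_ltn_trans rN).
  have := @leq_bigmax_cond _ (restrict N (x |: G)) (fun B => #|B|) (x |: A).
  rewrite cardsU1 xA; apply; rewrite /restrict inE ixA /=.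
  exact: setUS.
have := hyp (X := ~: G); rewrite setCK => /(_ fl).
have -> : famrank (restrict N G) <= k - 1 by apply: (leq_trans rN); lia.
move=> /(_ isT) H.
have cD : #|S :\: A| = #|S| - #|A| by rewrite cardsD (setIidPr sAS).
have csub : #|A| <= #|S| by apply: subset_leq_card.
lia.
Qed.
End Block.

Section Main.
Variables (T : finType) (M N : matroid T) (k : nat).
Local Notation vtx := (rg_vertex M N k).
Local Notation adj := (rg_adj M N k).

Lemma adj_sym : symmetric adj.
Proof. by move=> S U; rewrite /rg_adj setUC; case: (vtx S); case: (vtx U). Qed.

Lemma connS : connect_sym adj.
Proof. exact: sym_connect_sym adj_sym. Qed.

Lemma vtx_card S : vtx S -> #|S| = k.
Proof. by case/and3P=> _ _ /eqP. Qed.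

Lemma adj_intro S S' x0 : vtx S -> vtx S' -> x0 \notin S -> x0 \in S' ->
  S' \subset x0 |: S -> indep M (x0 |: S) -> adj S S'.
Proof.
move=> vS vS' x0S x0S' sub iM.
have e : S :|: S' = x0 |: S.
  apply/eqP; rewrite eqEsubset; apply/andP; split.
    by rewrite subUset subsetU1 sub.
  apply/subsetP=> z; rewrite !inE; case/orP=> [/eqP ->|->]; by rewrite ?x0S' ?orbT.
by rewrite /rg_adj vS vS' e iM cardsU1 x0S (vtx_card vS) /=.
Qed.

Lemma case1 S U b : vtx S -> vtx U -> b \in U -> b \notin S -> indep M (b |: S) ->
  exists2 W, adj S W & #|S :&: U| < #|W :&: U|.
Proof.
move=> vS vU bU bS ibS.
case/and3P: (vS) => iMS iNS /eqP cS; case/and3P: (vU) => iMU iNU /eqP cU.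
set A := b |: (S :&: U).
have sAU : A \subset U.
  by apply/subsetP => z; rewrite !inE; case/orP => [/eqP ->|/andP[_ ->]].
have iA : indep N A := indep_sub sAU iNU.
have cA : #|A| = (#|S :&: U|).+1 by rewrite cardsU1 !inE (negbTE bS).
have lt : #|S :&: U| < k.
  have : S :&: U \subset U :\ b.
    apply/subsetP => z; rewrite !inE => /andP [zS ->]; rewrite andbT.
    by apply: contraNneq bS => <-.
  move/subset_leq_card; have := cardsD1 b U; rewrite bU cU /=; lia.
have [W [iW sAW sWAS cW]] := ext iA iNS (ltac:(by rewrite cA cS)).
have sWbS : W \subset b |: S.
  apply: (subset_trans sWAS); apply/subsetP => z; rewrite !inE.
  by case/orP => [/orP [->|/andP [-> _]]|->]; rewrite ?orbT.
have bW : b \in W := subsetP sAW b (setU11 b _).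
have vW : vtx W by rewrite /rg_vertex iW (indep_sub sWbS ibS) cW cS eqxx.
exists W; first exact: adj_intro vS vW bS bW sWbS ibS.
have : A \subset W :&: U by rewrite subsetI sAW sAU.
by move/subset_leq_card; rewrite cA.
Qed.

Variable E : nat.
Hypothesis HE : forall P Q, vtx P -> vtx Q -> ~~ connect adj P Q -> #|P :&: Q| <= E.

Definition minpair S U := [/\ vtx S, vtx U, ~~ connect adj S U & #|S :&: U| = E].

Lemma minpair_sym S U : minpair S U -> minpair U S.
Proof. by case=> vS vU nc cE; split=> //; [rewrite connS | rewrite setIC]. Qed.

Lemma no_conn S U P Q : ~~ connect adj S U -> connect adj S P -> connect adj U Q ->
  ~~ connect adj P Q.
Proof.
move=> nSU cSP cUQ; apply: contra nSU => cPQ.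
apply: (connect_trans cSP); apply: (connect_trans cPQ); by rewrite connS.
Qed.

Lemma adj_vtx2 S W : adj S W -> vtx W.
Proof. by case/and4P. Qed.

Lemma mp2 S U b : minpair S U -> b \in U -> b \notin S -> ~~ indep M (b |: S).
Proof.
case=> vS vU nc cE bU bS; apply/negP => ib.
have [W aSW lt] := case1 vS vU bU bS ib.
have := HE (adj_vtx2 aSW) vU (no_conn nc (connect1 aSW) (connect0 _ U)).
lia.
Qed.

Lemma UM S U x0 : minpair S U -> x0 \notin S -> indep M (x0 |: S) ->
  x0 \notin U /\ indep M (x0 |: U).
Proof.
move=> mp x0S i0.
have x0U : x0 \notin U by apply/negP => x0U; move: (mp2 mp x0U x0S); rewrite i0.
split=> //; case: (mp) => vS vU nc cE.
case/and3P: (vU) => iMU _ _.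
have lt : #|U| < #|x0 |: S| by rewrite cardsU1 x0S (vtx_card vS) (vtx_card vU).
have [e /setDP [eS eU] ie] := indep_aug iMU i0 lt.
move: eS; rewrite !inE => /orP [/eqP eq|eS]; first by rewrite -eq.
by move: (mp2 (minpair_sym mp) eS eU); rewrite ie.
Qed.

Lemma mp_diff S U : minpair S U -> exists2 a, a \in S & a \notin U.
Proof.
case=> vS vU nc _; apply/subsetPn; apply: contra nc => sSU.
have eSU : S == U by rewrite eqEcard sSU (vtx_card vS) (vtx_card vU) /=.
by rewrite (eqP eSU) connect0.
Qed.

Inductive yp (S U : {set T}) : nat -> T -> Prop :=
| yp1 y : y \in S -> y \notin U -> yp S U 1 y
| ypS n y x y' : y \in S -> x \notin S -> indep M (x |: (S :\ y)) ->
    indep N (x |: (S :\ y')) -> yp S U n y' -> yp S U n.+1 y.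

Lemma yp_in S U n y : yp S U n y -> y \in S /\ 0 < n.
Proof. by case. Qed.

Definition Qm m := forall S U, minpair S U -> forall x0 y1, x0 \notin S ->
  indep M (x0 |: S) -> indep N (x0 |: (S :\ y1)) -> yp S U m y1 -> False.

Lemma vtx_swap S x0 y : vtx S -> x0 \notin S -> y \in S -> indep M (x0 |: S) ->
  indep N (x0 |: (S :\ y)) -> vtx (x0 |: (S :\ y)).
Proof.
move=> vS x0S yS iM iN; rewrite /rg_vertex iN.
have -> : indep M (x0 |: (S :\ y)).
  apply: (indep_sub _ iM); apply/subsetP=> z; rewrite !inE.
  by case/orP=> [->|/andP [_ ->]]; rewrite ?orbT.
rewrite cardsU1 !inE (negbTE x0S) andbF /=.
by have := cardsD1 y S; rewrite yS (vtx_card vS) => ->.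
Qed.

Lemma sub_swap (S : {set T}) (x0 y : T) : x0 |: (S :\ y) \subset x0 |: S.
Proof.
by apply/subsetP=> z; rewrite !inE; case/orP=> [->|/andP [_ ->]]; rewrite ?orbT.
Qed.

Lemma main_claim m : Qm m.
Proof.
elim/ltn_ind: m => m IH S U mp x0 y1 x0S i0 iN1 ypm.
case: (mp) => vS vU nc cE.
case/and3P: (vS) => iMS iNS /eqP cS; case/and3P: (vU) => iMU iNU /eqP cU.
have Sh1 : forall j x y, j < m -> x \notin S -> indep N (x |: (S :\ y)) -> yp S U j y ->
    ~~ indep M (x |: S).
  move=> j x y jm xS ixy yj; apply/negP => ix; exact: (IH j jm S U mp x y xS ix ixy yj).
have Sh2 : forall j y, j < m -> yp S U j y -> ~~ indep N (x0 |: (S :\ y)).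
  move=> j y jm yj; apply/negP => i; exact: (IH j jm S U mp x0 y x0S i0 i yj).
have [x0U iMU0] := UM mp x0S i0.
case: m y1 / ypm IH Sh1 Sh2 iN1 => [y1 y1S y1U|n y1 x1 y' y1S x1S iMe iNe ypn] IH Sh1 Sh2 iN1.
-
  set S' := x0 |: (S :\ y1).
  have vS' : vtx S' := vtx_swap vS x0S y1S i0 iN1.
  have x0S' : x0 \in S' by rewrite setU11.
  have aSS' : adj S S' := adj_intro vS vS' x0S x0S' (sub_swap _ _ _) i0.
  have [W aUW lt] := case1 vU vS' x0S' x0U iMU0.
  have := HE vS' (adj_vtx2 aUW) (no_conn nc (connect1 aSS') (connect1 aUW)).
  have e : U :&: S' = S :&: U.
    apply/setP => z; rewrite !inE; case: (z =P x0) => [->|_].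
      by rewrite (negbTE x0U) (negbTE x0S).
    case: (z =P y1) => [->|_] /=; first by rewrite (negbTE y1U) !andbF.
    by rewrite andbC.
  move: lt; rewrite e cE setIC => a b; by rewrite ltnNge b in a.
-
  have [y'S n0] := yp_in ypn.
  have lt1 : 1 < n.+1 by [].
  have y1U : y1 \in U.
    apply/negPn/negP => y1U; by move: (Sh2 1 y1 lt1 (yp1 y1S y1U)); rewrite iN1.
  have x1M : ~~ indep M (x1 |: S) := Sh1 n x1 y' (ltnSn n) x1S iNe ypn.
  have x1x0 : x1 != x0 by apply: contraNneq x1M => ->.
  have y'N : ~~ indep N (x0 |: (S :\ y')) := Sh2 n y' (ltnSn n) ypn.
  have y1y' : y1 != y' by apply: contraNneq y'N => <-.
  set S1 := x0 |: (S :\ y1); set U1 := x0 |: (U :\ y1).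
  have vS1 : vtx S1 := vtx_swap vS x0S y1S i0 iN1.
  have aS1 : adj S S1 := adj_intro vS vS1 x0S (setU11 _ _) (sub_swap _ _ _) i0.
  have noSU : forall a, a \in S -> a \notin U -> ~~ indep N (x0 |: (S :\ a)).
    by move=> a aS aU; apply: (Sh2 1 a lt1 (yp1 aS aU)).
  set Z := S :&: U.
  have y1Z : y1 \in Z by rewrite inE y1S y1U.
  have cZ : #|Z| = (#|Z :\ y1|).+1 by rewrite (cardsD1 y1 Z) y1Z.
  have ZS : Z \subset S := subsetIl S U.
  have ZU : Z \subset U := subsetIr S U.
  have cA0 : #|x0 |: (Z :\ y1)| = #|Z| by rewrite cardsU1 !inE (negbTE x0S) andbF cZ.
  have iNU1 : indep N U1.
    set A := x0 |: (Z :\ y1).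
    have iA : indep N A.
      apply: (indep_sub _ iN1); apply: setUS; exact: setSD.
    have cA : #|A| = #|Z| by rewrite cardsU1 !inE (negbTE x0S) andbF cZ.
    have [W [iW sAW sWAU cW]] := ext iA iNU (ltac:(by rewrite cA subset_leq_card)).
    have sWU : W \subset x0 |: U.
      apply: (subset_trans sWAU); rewrite subUset subsetU1 andbT.
      apply: setUS; apply: (subset_trans (subsetDl _ _)) ZU.
    case y1W : (y1 \in W).
      have iZ : indep N (x0 |: Z).
        apply: (indep_sub _ iW); apply/subsetP => z; rewrite !inE.
        case/orP => [/eqP ->|zZ]; first by apply: (subsetP sAW); rewrite setU11.
        case: (z =P y1) => [->//|/eqP zy1]; apply: (subsetP sAW).
        by rewrite !inE zy1 zZ orbT.
      have [a aS aU] := mp_diff mp.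
      have ltZ : #|Z| < k.
        have : Z \subset S :\ a.
          apply/subsetP => z; rewrite !inE => /andP [zS zU]; rewrite zS andbT.
          by apply: contraNneq aU => <-.
        move/subset_leq_card; have := cardsD1 a S; rewrite aS cS => -> /=; by [].
      have [W2 [iW2 sZW2 sW2 cW2]] := ext iZ iNS (ltac:(by rewrite cardsU1 !inE (negbTE x0S) cS)).
      have sW2S : W2 \subset x0 |: S.
        apply: (subset_trans sW2); rewrite subUset subsetU1 andbT.
        by apply: setUS.
      have [a' a'S a'W2] := missing sW2S (ltac:(by rewrite cW2 cardsU1 x0S cS)).
      have a'x0 : a' != x0 by apply: contraNneq a'W2 => ->; apply: (subsetP sZW2); rewrite setU11.
      move: a'S; rewrite !inE (negbTE a'x0) /= => a'S.
      have a'U : a' \notin U.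
        apply: contra a'W2 => a'U; apply: (subsetP sZW2); by rewrite !inE a'S a'U orbT.
      case/negP: (noSU a' a'S a'U); apply: (fill _ _ iW2).
        apply/subsetP => z zW2; have := subsetP sW2S z zW2; rewrite !inE.
        case/orP => [->//|zS]; rewrite zS andbT; apply/orP; right.
        by apply: contraNneq a'W2 => <-.
      rewrite cW2 cardsU1 !inE (negbTE x0S) andbF /=.
      by have := cardsD1 a' S; rewrite a'S cS => ->.
    apply: (fill _ _ iW).
      apply/subsetP => z zW; have := subsetP sWU z zW; rewrite !inE.
      case/orP => [->//|zU]; rewrite zU andbT; apply/orP; right.
      by apply: contraTneq zW => ->; rewrite y1W.
    rewrite cW cardsU1 !inE (negbTE x0U) andbF /=.
    by have := cardsD1 y1 U; rewrite y1U cU => ->.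
  have vU1 : vtx U1.
    rewrite /rg_vertex iNU1 (indep_sub (sub_swap _ _ _) iMU0).
    rewrite cardsU1 !inE (negbTE x0U) andbF /=.
    by have := cardsD1 y1 U; rewrite y1U cU => <-.
  have aU1 : adj U U1 := adj_intro vU vU1 x0U (setU11 _ _) (sub_swap _ _ _) iMU0.
  have mp1 : minpair S1 U1.
    have nc1 := no_conn nc (connect1 aS1) (connect1 aU1).
    split=> //; apply/eqP; rewrite eqn_leq (HE vS1 vU1 nc1) /=.
    have : x0 |: (Z :\ y1) \subset S1 :&: U1.
      by rewrite subsetI; apply/andP; split; apply: setUS; apply: setSD.
    by move/subset_leq_card; rewrite cA0 -/Z cE.
  have transp : forall j y, yp S U j y -> j <= n -> yp S1 U1 j y.
    move=> j y; elim => {j y} [y yS yU|j y x y'' yS xS iM iN ypj IHj] jn.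
      apply: yp1.
        rewrite !inE yS andbT; apply/orP; right; by apply: contraNneq yU => ->.
      rewrite !inE negb_or negb_and yU orbT andbT.
      by apply: contraNneq x0S => <-.
    have jm : j < n.+1 by apply: leq_trans jn _.
    have yy1 : y != y1.
      apply: contraNneq (Sh2 j.+1 y (ltac:(by rewrite ltnS)) (ypS yS xS iM iN ypj)) => ->; exact: iN1.
    have xM : ~~ indep M (x |: S) := Sh1 j x y'' jm xS iN ypj.
    have xx0 : x != x0 by apply: contraNneq xM => ->.
    have y''N : ~~ indep N (x0 |: (S :\ y'')) := Sh2 j y'' jm ypj.
    have y1y'' : y1 != y'' by apply: contraNneq y''N => <-.
    have [y''S _] := yp_in ypj.
    apply: (ypS (x := x) (y' := y'')).
    - by rewrite !inE yy1 yS orbT.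
    - by rewrite !inE negb_or xx0 negb_and xS orbT.
    - have := Mlem x0S i0 xM yS xS iM; apply: indep_sub.
      apply/subsetP => z; rewrite !inE.
      case/orP => [->|/andP [zy /orP [->|/andP [zy1 zS]]]]; rewrite ?orbT //.
      by rewrite zy zS !orbT.
    - exact: Nlem x0S xS xx0 y1S y''S y1y'' iN1 iN y''N.
    - by apply: IHj; apply: ltnW.
  apply: (IH n (ltnSn n) S1 U1 mp1 x1 y').
  - by rewrite !inE negb_or x1x0 negb_and x1S orbT.
  - have := Mlem x0S i0 x1M y1S x1S iMe; apply: indep_sub.
    apply/subsetP => z; rewrite !inE.
    case/orP => [->|/orP [->|/andP [zy1 zS]]]; rewrite ?orbT //.
    by rewrite zy1 zS !orbT.
  - exact: Nlem x0S x1S x1x0 y1S y'S y1y' iN1 iNe y'N.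
  - exact: transp n y' ypn (leqnn n).
Qed.

End Main.

Definition pb (P : Prop) : bool := if excluded_middle_informative P then true else false.
Lemma pbP (P : Prop) : reflect P (pb P).
Proof. by rewrite /pb; case: excluded_middle_informative => h; constructor. Qed.

Unset Implicit Arguments.

Theorem theorem5p3 (T : finType) (M N : matroid T) (k : nat) :
  1 <= k ->
  (forall X : {set T},
     flat N (~: X) -> famrank (restrict N (~: X)) <= k - 1 ->
     k.+1 <= famrank (restrict M X) + famrank (restrict N (~: X))) ->
  rg_connected M N k.
Proof.
move=> hk hyp S U vS vU; apply/idPn => nc.
pose P := fun n => [exists S : {set T}, exists U : {set T},
  [&& rg_vertex M N k S, rg_vertex M N k U, ~~ connect (rg_adj M N k) S U & #|S :&: U| == n]].
have exP : exists n, P n.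
  exists #|S :&: U|; apply/existsP; exists S; apply/existsP; exists U; by rewrite vS vU nc eqxx.
have ubP : forall n, P n -> n <= #|T|.
  by move=> n /existsP [S' /existsP [U' /and4P [_ _ _ /eqP <-]]]; exact: max_card.
case: (ex_maxnP exP ubP) => E /existsP [S0 /existsP [U0 /and4P [vS0 vU0 nc0 /eqP cE]]] maxE.
have HE : forall P Q, rg_vertex M N k P -> rg_vertex M N k Q ->
    ~~ connect (rg_adj M N k) P Q -> #|P :&: Q| <= E.
  move=> P0 Q0 vP vQ ncPQ; apply: maxE; apply/existsP; exists P0; apply/existsP; exists Q0.
  by rewrite vP vQ ncPQ eqxx.
have mp : minpair M N k E S0 U0 by [].
case: (classic (exists x0 y1 m, [/\ x0 \notin S0, indep M (x0 |: S0),
         indep N (x0 |: (S0 :\ y1)) & yp M N S0 U0 m y1])) => [[x0 [y1 [m [h1 h2 h3 h4]]]]|NP].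
  exact: (main_claim HE mp h1 h2 h3 h4).
pose Y := [set y in S0 | pb (exists m, yp M N S0 U0 m y)].
pose A := S0 :\: Y.
have inY : forall z, (z \in Y) = (z \in S0) && pb (exists m, yp M N S0 U0 m z).
  by move=> z; rewrite /Y inE.
have inA : forall z, (z \in A) = (z \notin Y) && (z \in S0).
  by move=> z; rewrite /A inE.
have cS0 : #|S0| = k by case/and3P: vS0 => _ _ /eqP.
case/and3P: (vS0) => iMS iNS _.
have sAS : A \subset S0 by apply/subsetP => z; rewrite inA => /andP [].
have ltA : #|A| < k.
  have [a aS aU] := mp_diff mp.
  have aY : a \in Y by rewrite inY aS; apply/pbP; exists 1; exact: yp1.
  have : A \subset S0 :\ a.
    apply/subsetP => z; rewrite inA in_setD1 => /andP [zY ->]; rewrite andbT.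
    by apply: contraNneq zY => ->.
  move/subset_leq_card; have := cardsD1 a S0; rewrite aS cS0 => -> /=; by [].
apply: (@blocking T M N k hyp S0 A vS0 sAS ltA).
move=> x xA ixA.
case xS : (x \in S0); first by rewrite in_setD xA xS.
apply/orP; right; apply/negP => ixM.
have [W [iW sAW sW cW]] := ext ixA iNS (ltac:(by rewrite cardsU1 xA cS0)).
have sWS : W \subset x |: S0.
  apply: (subset_trans sW); rewrite subUset subsetU1 andbT; exact: setUS.
have [y yxS yW] := missing sWS (ltac:(by rewrite cW cardsU1 xS)).
have xW : x \in W by apply: (subsetP sAW); rewrite setU11.
have yx : y != x by apply: contraNneq yW => ->.
move: yxS; rewrite !inE (negbTE yx) /= => yS.
have yA : y \notin A by apply: contra yW => yA; apply: (subsetP sAW); rewrite in_setU1 yA orbT.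
have yY : y \in Y by move: yA; rewrite inA yS andbT negbK.
have iNy : indep N (x |: (S0 :\ y)).
  apply: (fill _ _ iW).
    apply/subsetP => z zW; have := subsetP sWS z zW; rewrite !inE.
    case/orP => [->//|zS]; rewrite zS andbT; apply/orP; right.
    by apply: contraTneq zW => ->.
  by rewrite cW cardsU1 !inE xS andbF /= cS0; have := cardsD1 y S0; rewrite yS cS0 => ->.
move: yY; rewrite inY yS /= => /pbP [m ypm].
case iMx : (indep M (x |: S0)).
  by apply: NP; exists x, y, m; split; rewrite ?xS ?iMx.
have [a aA] : exists a, a \in A.
  case: (set_0Vmem A) => [A0|[a0 a0A]]; last by exists a0.
  by move: ixM; rewrite A0 setD0 iMx.
have aS : a \in S0 by apply: (subsetP sAS).
have ltSA : #|S0 :\: A| < #|S0|.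
  have : S0 :\: A \subset S0 :\ a.
    apply/subsetP => z; rewrite in_setD in_setD1 => /andP [zA ->]; rewrite andbT.
    by apply: contraNneq zA => ->.
  move/subset_leq_card; have := cardsD1 a S0; rewrite aS cS0 => -> /=; by [].
have [W2 [iW2 sAW2 sW2 cW2]] := ext ixM iMS (ltac:(by rewrite cardsU1 in_setD xS andbF add1n)).
have sW2S : W2 \subset x |: S0.
  apply: (subset_trans sW2); rewrite subUset subsetU1 andbT; apply: setUS; exact: subsetDl.
have [y' y'xS y'W] := missing sW2S (ltac:(by rewrite cW2 cardsU1 xS)).
have xW2 : x \in W2 by apply: (subsetP sAW2); rewrite setU11.
have y'x : y' != x by apply: contraNneq y'W => ->.
move: y'xS; rewrite !inE (negbTE y'x) /= => y'S.
have y'A : y' \in A.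
  apply/negPn/negP => y'A; case/negP: y'W; apply: (subsetP sAW2).
  by rewrite in_setU1 in_setD y'A y'S orbT.
have iMy' : indep M (x |: (S0 :\ y')).
  apply: (fill _ _ iW2).
    apply/subsetP => z zW; have := subsetP sW2S z zW; rewrite !inE.
    case/orP => [->//|zS]; rewrite zS andbT; apply/orP; right.
    by apply: contraTneq zW => ->.
  by rewrite cW2 cardsU1 !inE xS andbF /= cS0; have := cardsD1 y' S0; rewrite y'S cS0 => ->.
have : y' \in Y.
  rewrite inY y'S /=; apply/pbP; exists m.+1.
  apply: (ypS (x := x) (y' := y)) => //; by rewrite xS.
by move: y'A; rewrite inA => /andP [/negP].
Qed.
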